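(* For every integer $m\ge1$, the following identity holds in the field $\mathbb Q(q)(w,z_1,\dots,z_m)$ of rational functions (with $q$ an indeterminate): $$\sum_{\sigma\in S_m}\sum_{r=0}^{m}\begin{bmatrix} m\\ r\end{bmatrix}\prod_{k=1}^{r}\big(w-q^{m-1}z_{\sigma(k)}\big)\prod_{k=r+1}^{m}\big(z_{\sigma(k)}-q^{m-1}w\big)\prod_{1\le i<j\le m}\frac{z_{\sigma(i)}-q^{2}z_{\sigma(j)}}{z_{\sigma(i)}-z_{\sigma(j)}}=0.$$
   Context: $[k]=\frac{q^k-q^{-k}}{q-q^{-1}}$, $[k]!=[1][2]\cdots[k]$ with $[0]!=1$, and $\begin{bmatrix} m\\ r\end{bmatrix}=\frac{[m]!}{[r]![m-r]!}$ (a Laurent polynomial in $q$). $S_m$ is the symmetric group on $\{1,\dots,m\}$, acting by permuting the indices of $z_1,\dots,z_m$. *)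

(* Defs.v *)
From HB Require Import structures.
From mathcomp Require Import all_boot all_order all_algebra all_fingroup.
From mathcomp Require Import fraction.
From mathcomp Require Import mpoly.
Set Implicit Arguments. Unset Strict Implicit. Unset Printing Implicit Defensive.
Import Order.TTheory GRing.Theory.
Local Open Scope ring_scope.

Definition qint (F : fieldType) (q : F) (k : nat) : F :=
  (q ^+ k - q^-1 ^+ k) / (q - q^-1).
Definition qfact (F : fieldType) (q : F) (k : nat) : F :=
  \prod_(1 <= i < k.+1) qint q i.
Definition qbinom (F : fieldType) (q : F) (m r : nat) : F :=
  qfact q m / (qfact q r * qfact q (m - r)).

(* The field Q(q)(w, z_1, ..., z_m) realised as the fraction field of
   Q[X_0, X_1, ..., X_(m+1)], with q = X_0, w = X_1, z_(i+1) = X_(i+2). *)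
Definition RatFun (m : nat) : fieldType := {fraction {mpoly rat[m.+2]}}.

Definition varq (m : nat) : RatFun m := (FracField.tofrac 'X_(@ord0 m.+1)).
Definition varw (m : nat) : RatFun m := (FracField.tofrac 'X_(@inord m.+1 1)).
Definition varz (m : nat) (i : 'I_m) : RatFun m := (FracField.tofrac 'X_(@inord m.+1 i.+2)).

(* Main.v *)
Require Import Defs.
From HB Require Import structures.
From mathcomp Require Import all_boot all_order all_algebra all_fingroup.
From mathcomp Require Import fraction.
From mathcomp Require Import mpoly.
From mathcomp Require Import zify ring.
From Stdlib Require Import FunctionalExtensionality.
Import GRing.Theory.
Local Open Scope ring_scope.
Set Implicit Arguments. Unset Strict Implicit. Unset Printing Implicit Defensive.


Section Sym.
Variable F : fieldType.
Variable t : F.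
Variable m : nat.

Definition psi (a b : F) := (a - t * b) / (a - b).
Definition Delta (y : 'I_m -> F) :=
  \prod_(i < m) \prod_(j < m | (i < j)%N) psi (y i) (y j).

Lemma Delta_pair y : Delta y = \prod_(p : 'I_m * 'I_m | (p.1 < p.2)%N) psi (y p.1) (y p.2).
Proof. by rewrite /Delta pair_big_dep. Qed.

Lemma tperm_lt (i j a c : 'I_m) : j = i.+1 :> nat ->
  ((tperm i j a < tperm i j c)%N && ((a, c) != (j, i))) =
  ((a < c)%N && ((a, c) != (i, j))).
Proof.
move=> hij.
have nij : i != j by apply/eqP => e; move: hij; rewrite e; lia.
rewrite !xpair_eqE.
have tv : forall x : 'I_m, (tperm i j x : nat) =
  if x == i then nat_of_ord j else if x == j then nat_of_ord i else nat_of_ord x.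
  move=> x; case: (tpermP i j x) => [->|->|/eqP xi /eqP xj].
  - by rewrite eqxx.
  - by rewrite eq_sym (negbTE nij) eqxx.
  - by rewrite (negbTE xi) (negbTE xj).
rewrite !tv -!(inj_eq val_inj) /=.
have := ltn_ord a; have := ltn_ord c.
move: (nat_of_ord a) (nat_of_ord c) (nat_of_ord i) (nat_of_ord j) hij => A C I J ->.
do 4 case: eqP; move=> *; lia.
Qed.



Lemma Delta_swap (i j : 'I_m) (y : 'I_m -> F) : j = i.+1 :> nat ->
  Delta (fun k => y (tperm i j k)) * (y i - t * y j) = - ((y j - t * y i) * Delta y).
Proof.
move=> hij.
have lij : (i < j)%N by rewrite hij.
rewrite !Delta_pair.
have hinj : injective (fun p : 'I_m * 'I_m => (tperm i j p.1, tperm i j p.2)).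
  by apply: (can_inj (g := fun p : 'I_m * 'I_m => (tperm i j p.1, tperm i j p.2))) => -[a b] /=; rewrite !tpermK.
rewrite (reindex_inj hinj) /=.
under eq_bigr do rewrite !tpermK.
rewrite (bigD1 (j, i)) /=; last by rewrite tpermR tpermL.
rewrite [in RHS](bigD1 (i, j)) //=.
rewrite (eq_bigl (fun p : 'I_m * 'I_m => (p.1 < p.2)%N && (p != (i, j)))); last first.
  by move=> [a c]; rewrite /= tperm_lt.
set R := \prod_(p | _) _.
rewrite /psi.
have e : (y j - y i)^-1 = - (y i - y j)^-1 by rewrite -invrN opprB.
rewrite e; ring.
Qed.

Variable z : 'I_m -> F.
Definition L (g : ('I_m -> F) -> F) :=
  \sum_(s : 'S_m) g (fun k => z (s k)) * Delta (fun k => z (s k)).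

Lemma L_kernel (i j : 'I_m) (h : ('I_m -> F) -> F) : j = i.+1 :> nat -> (2%:R : F) != 0 ->
  (forall y, h (fun k => y (tperm i j k)) = h y) ->
  L (fun y => (y j - t * y i) * h y) = 0.
Proof.
move=> hij h2 hsym.
set S := L _.
pose G := fun y : 'I_m -> F => (y j - t * y i) * h y * Delta y.
have GE : forall y, G (fun k => y (tperm i j k)) = - G y.
  move=> y; rewrite /G hsym tpermL tpermR mulrAC [(y i - t * y j) * _]mulrC Delta_swap //.
  ring.
have eS : S = - S.
  rewrite {1}/S /L (reindex_inj (mulgI (tperm i j))) /= /S /L -sumrN.
  apply: eq_bigr => s _.
  transitivity (G (fun k => z ((tperm i j * s)%g k))); first by [].
  have -> : (fun k => z ((tperm i j * s)%g k)) = (fun k => (fun k => z (s k)) (tperm i j k)).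
    by apply: functional_extensionality => k; rewrite permM.
  exact: (GE (fun k => z (s k))).
have : S *+ 2 = 0 by rewrite mulr2n {1}eS addNr.
by rewrite -mulr_natr => /eqP; rewrite mulf_eq0 (negbTE h2) orbF => /eqP.
Qed.

Lemma L_ext g1 g2 : (forall y, g1 y = g2 y) -> L g1 = L g2.
Proof. by move=> e; apply: eq_bigr => s _; rewrite e. Qed.

Definition mono (b : {ffun 'I_m -> bool}) (y : 'I_m -> F) :=
  \prod_(k < m) (if b k then y k else 1).
Definition sw (b : {ffun 'I_m -> bool}) : nat := (\sum_(k < m | ~~ b k) (m.-1 - k))%N.
Definition nf (b : {ffun 'I_m -> bool}) : nat := (\sum_(k < m | ~~ b k) 1)%N.
Definition cw (j : nat) : {ffun 'I_m -> bool} := [ffun k : 'I_m => (k < m - j)%N].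
Definition K (j : nat) := L (mono (cw j)) / t ^+ sw (cw j).

Lemma mono_swap (b : {ffun 'I_m -> bool}) (i j : 'I_m) : j = i.+1 :> nat -> (2%:R : F) != 0 ->
  ~~ b i -> b j ->
  L (mono b) = t * L (mono [ffun k => b (tperm i j k)]).
Proof.
move=> hij h2 bi bj.
have nij : i != j by apply/eqP => e; move: hij; rewrite e; lia.
pose P (y : 'I_m -> F) := \prod_(k < m | (k != i) && (k != j)) (if b k then y k else 1).
have e1 : forall y, mono b y = y j * P y.
  move=> y; rewrite /mono (bigD1 j) //= bj; congr (_ * _).
  rewrite (bigD1 i) //=.
  rewrite (negbTE bi) mul1r; apply: eq_bigl => k; by rewrite andbC.
have e2 : forall y, mono [ffun k => b (tperm i j k)] y = y i * P y.
  move=> y; rewrite /mono (bigD1 i) //= ffunE tpermL bj; congr (_ * _).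
  have nji : j != i by rewrite eq_sym.
  rewrite (bigD1 j) //=.
  rewrite ffunE tpermR (negbTE bi) mul1r; apply: eq_big => k.
    by rewrite andbC.
  move=> /andP [ki kj]; rewrite ffunE tpermD // eq_sym //.
have hP : forall y, P (fun k => y (tperm i j k)) = P y.
  move=> y; apply: eq_bigr => k /andP [ki kj]; rewrite tpermD // eq_sym //.
have := L_kernel hij h2 hP.
rewrite (L_ext e1) (L_ext e2) /L.
under eq_bigr do rewrite mulrBl mulrBl.
rewrite sumrB mulr_sumr => /eqP; rewrite subr_eq0 => /eqP ->.
by apply: eq_bigr => s _; rewrite !mulrA.
Qed.

Lemma sum_swap (b : {ffun 'I_m -> bool}) (i j : 'I_m) (e : 'I_m -> nat) :
  (\sum_(k < m | ~~ [ffun k => b (tperm i j k)] k) e k =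
   \sum_(k < m | ~~ b k) e (tperm i j k))%N.
Proof.
rewrite (reindex_inj (@perm_inj _ (tperm i j))) /=.
by apply: eq_bigl => k; rewrite ffunE tpermK.
Qed.

Lemma nf_swap (b : {ffun 'I_m -> bool}) (i j : 'I_m) :
  nf [ffun k => b (tperm i j k)] = nf b.
Proof. by rewrite /nf sum_swap. Qed.

Lemma sw_swap (b : {ffun 'I_m -> bool}) (i j : 'I_m) : j = i.+1 :> nat ->
  ~~ b i -> b j -> sw b = (sw [ffun k => b (tperm i j k)]).+1.
Proof.
move=> hij bi bj.
rewrite /sw sum_swap (bigD1 i) //= [in RHS](bigD1 i) //= tpermL.
have -> : (\sum_(k < m | ~~ b k && (k != i)) (m.-1 - tperm i j k) =
          \sum_(k < m | ~~ b k && (k != i)) (m.-1 - k))%N.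
  apply: eq_bigr => k /andP [bk ki]; rewrite tpermD // ?(eq_sym i) //.
  by apply/eqP => ejk; move: bk; rewrite -ejk bj.
have := ltn_ord j; rewrite hij; move: (\sum_(_ < _ | _) _)%N => S; rewrite -!subn1; lia.
Qed.

Lemma mono_normal (b : {ffun 'I_m -> bool}) :
  (forall i j : 'I_m, j = i.+1 :> nat -> b j -> b i) -> b = cw (nf b).
Proof.
move=> hmon.
pose bn n := oapp b false (insub n : option 'I_m).
have bnE : forall k : 'I_m, bn k = b k by move=> k; rewrite /bn valK.
have bnm : forall n, bn n.+1 -> bn n.
  move=> n; rewrite /bn; case: insubP => //= k kin ek.
  have nm : (n < m)%N by apply: ltnW.
  move=> bk0; rewrite (insubT (fun x => x < m)%N nm) /=; apply: (hmon _ k) => //; by rewrite /= ek.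
have exP : exists n, ~~ bn n by exists m; rewrite /bn insubN // ltnn.
have [p pP pmin] := find_ex_minn exP.
have pm : (p <= m)%N by apply: pmin; rewrite /bn insubN // ltnn.
have bk : forall k : 'I_m, b k = (k < p)%N.
  move=> k; rewrite -bnE; case: ltnP => kp.
    by apply/negbNE/negP => /pmin; rewrite leqNgt kp.
  apply/negbTE; apply/negP => bnk; move/negP: pP; apply.
  move: bnk; rewrite -(subnKC kp); elim: (k - p)%N => [|d IH]; first by rewrite addn0.
  by rewrite addnS => /bnm.
have nfb : nf b = (m - p)%N.
  rewrite /nf (eq_bigl (fun k : 'I_m => true && (p <= k)%N)); last by move=> k; rewrite bk -leqNgt.
  by rewrite -(big_geq_mkord p m (fun _ => true) (fun _ => 1%N)) sum_nat_const_nat muln1.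
apply/ffunP => k; rewrite ffunE bk nfb subKn //.
Qed.

Lemma L_mono (b : {ffun 'I_m -> bool}) : t != 0 -> (2%:R : F) != 0 ->
  L (mono b) = t ^+ sw b * K (nf b).
Proof.
move=> t0 h2.
move: {2}(sw b) (leqnn (sw b)) => n; elim: n b => [|n IH] b hb.
all: case: (boolP [exists i : 'I_m, exists j : 'I_m, (j == i.+1 :> nat) && ~~ b i && b j]).
- move=> /existsP [i /existsP [j /andP [/andP [/eqP hij bi] bj]]].
  by move: hb; rewrite (sw_swap hij bi bj).
- move=> hn; have eb : b = cw (nf b).
    apply: mono_normal => i j hij bj; apply/negPn/negP => bi; move/negP: hn; apply.
    by apply/existsP; exists i; apply/existsP; exists j; rewrite hij eqxx bi bj.
  by rewrite /K -eb mulrC divfK // expf_neq0.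
- move=> /existsP [i /existsP [j /andP [/andP [/eqP hij bi] bj]]].
  rewrite (mono_swap hij h2 bi bj) IH; last by rewrite -ltnS -(sw_swap hij bi bj).
  by rewrite nf_swap (sw_swap hij bi bj) exprS mulrA.
- move=> hn; have eb : b = cw (nf b).
    apply: mono_normal => i j hij bj; apply/negPn/negP => bi; move/negP: hn; apply.
    by apply/existsP; exists i; apply/existsP; exists j; rewrite hij eqxx bi bj.
  by rewrite /K -eb mulrC divfK // expf_neq0.
Qed.

Definition Lam (p : {poly F}) := \sum_(j < m.+1) p`_j * K j.

Lemma nf_le (b : {ffun 'I_m -> bool}) : (nf b <= m)%N.
Proof.
rewrite /nf sum1_card -[X in (_ <= X)%N]card_ord; exact: max_card.
Qed.

Lemma Lam_sum (I : finType) (c : I -> F) (n : I -> nat) :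
  (forall i, n i <= m)%N ->
  Lam (\sum_(i : I) c i *: 'X^(n i)) = \sum_(i : I) c i * K (n i).
Proof.
move=> hn; rewrite /Lam.
under eq_bigr do rewrite coef_sum mulr_suml.
rewrite exchange_big /=; apply: eq_bigr => i _.
rewrite (bigD1 (inord (n i))) //= coefZ coefXn inordK ?ltnS // eqxx mulr1.
rewrite big1 ?addr0 // => j /negbTE jn.
rewrite coefZ coefXn.
have -> : (j == n i :> nat) = false.
  apply/negbTE/negP => /eqP e; move/negP: jn; apply; apply/eqP; apply: val_inj.
  by rewrite /= inordK ?ltnS // e.
by rewrite mulr0 mul0r.
Qed.

Lemma prod_split (α β : 'I_m -> F) (y : 'I_m -> F) :
  \prod_(k < m) (α k + β k * y k) =
  \sum_(b : {ffun 'I_m -> bool}) (\prod_(k < m) (if b k then β k else α k)) * mono b y.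
Proof.
have e : forall k, α k + β k * y k = \sum_(c : bool) (if c then β k * y k else α k).
  by move=> k; rewrite big_bool /= addrC.
under eq_bigr do rewrite e.
rewrite bigA_distr_bigA /=; apply: eq_bigr => b _.
rewrite /mono -big_split /=; apply: eq_bigr => k _.
by case: (b k); rewrite ?mulr1.
Qed.

Lemma prod_split_poly (a β : 'I_m -> F) :
  \prod_(k < m) (a k *: 'X + (β k)%:P) =
  \sum_(b : {ffun 'I_m -> bool})
     (\prod_(k < m) (if b k then β k else a k)) *: 'X^(nf b).
Proof.
have e : forall k, a k *: 'X + (β k)%:P = \sum_(c : bool) (if c then (β k)%:P else a k *: 'X).
  by move=> k; rewrite big_bool /= addrC.
under eq_bigr do rewrite e.
rewrite bigA_distr_bigA /=; apply: eq_bigr => b _.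
have e2 : forall k, (if b k then (β k)%:P else a k *: 'X) =
   (if b k then β k else a k)%:P * (if b k then 1 else 'X).
  by move=> k; case: (b k); rewrite ?mulr1 // mul_polyC.
under eq_bigr do rewrite e2.
rewrite big_split /= -rmorph_prod -mul_polyC; congr (_ * _).
rewrite /nf -prodrXr [RHS]big_mkcond /=; apply: eq_bigr => k _.
by case: (b k); rewrite /= ?expr1.
Qed.

Lemma L_letters (α β : 'I_m -> F) : t != 0 -> (2%:R : F) != 0 ->
  L (fun y => \prod_(k < m) (α k + β k * y k)) =
  Lam (\prod_(k < m) ((α k * t ^+ (m.-1 - k)) *: 'X + (β k)%:P)).
Proof.
move=> t0 h2.
rewrite (L_ext (prod_split α β)) prod_split_poly Lam_sum; last exact: nf_le.
have -> : L (fun y => \sum_(b : {ffun 'I_m -> bool})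
     (\prod_(k < m) (if b k then β k else α k)) * mono b y) =
   \sum_(b : {ffun 'I_m -> bool}) (\prod_(k < m) (if b k then β k else α k)) * L (mono b).
  rewrite /L; under eq_bigr do rewrite mulr_suml.
  rewrite exchange_big; apply: eq_bigr => b _; rewrite mulr_sumr; apply: eq_bigr => s _.
  by rewrite mulrA.
apply: eq_bigr => b _; rewrite L_mono // mulrA; congr (_ * _).
rewrite /sw -prodrXr [X in _ * X]big_mkcond -big_split /=; apply: eq_bigr => k _.
by case: (b k); rewrite /= ?mulr1.
Qed.
End Sym.




Fixpoint gb (R : pzRingType) (t : R) (n r : nat) : R :=
  match n, r with
  | 0, 0 => 1
  | 0, _.+1 => 0
  | _.+1, 0 => 1
  | n'.+1, r'.+1 => t ^+ (n' - r') * gb t n' r' + gb t n' r'.+1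
  end.

Lemma gb_gt (R : pzRingType) (t : R) n r : (n < r)%N -> gb t n r = 0.
Proof.
elim: n r => [|n IH] [|r] //= hr.
by rewrite IH // IH ?addr0 ?mulr0 // ltnW.
Qed.

Lemma gb_n0 (R : pzRingType) (t : R) n : gb t n 0 = 1.
Proof. by case: n. Qed.

Lemma vandermonde (R : comPzRingType) (t u : R) n :
  \sum_(0 <= r < n.+1) gb t n r * (\prod_(j < r) (u - t ^+ j)) * (\prod_(j < n - r) (1 - t ^+ j * u))
  = \prod_(j < n) (1 - t ^+ j).
Proof.
elim: n => [|n IH].
  by rewrite big_nat1 /= !big_ord0 !mulr1.
rewrite (big_ord_recr n) /= -IH mulr_suml.
rewrite big_nat_recl // big_ord0 mul1r subn0.
have e : forall k, (k < n.+1)%N ->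
  gb t n k * (\prod_(j < k) (u - t ^+ j)) * (\prod_(j < n - k) (1 - t ^+ j * u)) * (1 - t ^+ n) =
  t ^+ (n - k) * gb t n k * (\prod_(j < k.+1) (u - t ^+ j)) * (\prod_(j < n - k) (1 - t ^+ j * u))
  + gb t n k * (\prod_(j < k) (u - t ^+ j)) * (\prod_(j < n.+1 - k) (1 - t ^+ j * u)).
  move=> k kn; have kn' : (k <= n)%N by rewrite -ltnS.
  rewrite (big_ord_recr k) (subSn kn') (big_ord_recr (n - k)) /=.
  have -> : t ^+ n = t ^+ (n - k) * t ^+ k by rewrite -exprD subnK.
  set A := \prod_(i < k) _. set B := \prod_(i < n - k) _.
  ring.
rewrite mul1r.
rewrite (eq_big_nat _ _ (F1 := fun k => gb t n k * (\prod_(j < k) (u - t ^+ j)) * (\prod_(j < n - k) (1 - t ^+ j * u)) * (1 - t ^+ n)) (fun k hk => e k (proj2 (andP hk)))).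
rewrite big_split /=.
rewrite [X in _ = _ + X]big_nat_recl // gb_n0 big_ord0 !mul1r subn0.
rewrite addrCA; congr (_ + _).
under eq_bigr do rewrite !mulrDl.
rewrite big_split /=; congr (_ + _).
rewrite big_nat_recr //= gb_gt // !mul0r addr0.
by apply: eq_big_nat => k _; rewrite subSS.
Qed.

Section QB.
Variable F : fieldType.
Variable q : F.
Hypothesis hq0 : q != 0.
Hypothesis hqi : forall k, qint q k.+1 != 0.

Lemma qfact0 : qfact q 0 = 1.
Proof. by rewrite /qfact big_geq. Qed.

Lemma qfactS n : qfact q n.+1 = qfact q n * qint q n.+1.
Proof. by rewrite /qfact big_nat_recr. Qed.

Lemma qfact_neq0 n : qfact q n != 0.
Proof. elim: n => [|n IH]; first by rewrite qfact0 oner_neq0. by rewrite qfactS mulf_neq0. Qed.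

Lemma qbinom_n0 n : qbinom q n 0 = 1.
Proof. by rewrite /qbinom qfact0 mul1r subn0 divff // qfact_neq0. Qed.

Lemma qbinom_nn n : qbinom q n n = 1.
Proof. by rewrite /qbinom subnn qfact0 mulr1 divff // qfact_neq0. Qed.

Lemma qint_id k d :
  q ^+ k.+1 * qint q (k + d).+2 = q ^+ (k + d).+2 * qint q k.+1 + qint q d.+1.
Proof.
rewrite /qint !mulrA -mulrDl; congr (_ / _).
set p := q^-1.
have hab : q ^+ k.+1 * p ^+ k.+1 = 1 by rewrite -exprMn mulfV // expr1n.
have e1 : (k + d).+2 = (k.+1 + d.+1)%N by rewrite addSn addnS.
rewrite e1 !exprD.
apply/eqP; rewrite -subr_eq0; apply/eqP.
set a := q ^+ k.+1; set b := p ^+ k.+1; set c := q ^+ d.+1; set e := p ^+ d.+1.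
transitivity ((a * b - 1) * (c - e)); first ring.
by rewrite hab subrr mul0r.
Qed.

Lemma qpascal n k : (k < n)%N ->
  q ^+ k.+1 * qbinom q n.+1 k.+1 = q ^+ n.+1 * qbinom q n k + qbinom q n k.+1.
Proof.
move=> kn.
have [d ->] : exists d, n = (k + d).+1 by exists (n - k.+1)%N; lia.
rewrite /qbinom.
have e1 : ((k + d).+2 - k.+1)%N = d.+1 by lia.
have e2 : ((k + d).+1 - k)%N = d.+1 by lia.
have e3 : ((k + d).+1 - k.+1)%N = d by lia.
rewrite e1 e2 e3 !qfactS.
have f1 := qfact_neq0 k. have f2 := qfact_neq0 d. have f3 := qfact_neq0 (k + d).
have i1 := hqi k. have i2 := hqi d. have i3 := hqi (k + d).
have i4 := hqi (k + d).+1.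
have := qint_id k d.
set A := qint q (k + d).+2. set B := qint q k.+1. set C := qint q d.+1.
move=> hid.
have hA : A = (q ^+ (k + d).+2 * B + C) / q ^+ k.+1 by rewrite -hid [q ^+ k.+1 * A]mulrC mulfK // expf_neq0.
rewrite hA; field.
by rewrite f1 f2 i1 i2 expf_neq0.
Qed.

Lemma gb_qbinom n r : (r <= n)%N -> gb (q ^+ 2) n r = q ^+ (r * (n - r)) * qbinom q n r.
Proof.
elim: n r => [|n IH] [|r] //= hr.
- by rewrite /qbinom qfact0 !mul1r invr1.
- by rewrite qbinom_n0 mul1r.
- have [rn | rn] := ltnP r n.
  + rewrite !IH // ?ltnW //.
    have e : q ^+ (r.+1 * (n - r)) = q ^+ (r.+1 * (n - r.+1)) * q ^+ r.+1.
      by rewrite -exprD; congr (_ ^+ _); nia.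
    rewrite e -mulrA qpascal // mulrDr !mulrA -!exprM -!exprD.
    congr (_ ^+ _ * _ / _ + _); nia.
  + have rnn : r = n by lia.
    rewrite rnn subnn (@gb_gt _ _ n n.+1) // addr0 expr0 mul1r IH //.
    by rewrite !subnn !muln0 !expr0 !mul1r !qbinom_nn.
Qed.
End QB.



Lemma gb_polyC (F : fieldType) (t : F) n r : gb (t%:P) n r = (gb t n r)%:P.
Proof.
elim: n r => [|n IH] [|r] //=.
by rewrite rmorphD rmorphM rmorphXn !IH.
Qed.

Section PolyId.
Variable F : fieldType.
Variable q w : F.
Variable m : nat.
Hypothesis hm : (1 <= m)%N.
Hypothesis hq0 : q != 0.
Hypothesis hqi : forall k, qint q k.+1 != 0.

Let t := q ^+ 2.
Let Q := q ^+ m.-1.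
Definition alr (r : nat) (k : nat) : F := if (k < r)%N then w else - (Q * w).
Definition ber (r : nat) (k : nat) : F := if (k < r)%N then - Q else 1.
Definition polyR (r : nat) : {poly F} :=
  \prod_(k < m) ((alr r k * t ^+ (m.-1 - k)) *: 'X + (ber r k)%:P).

Let T : {poly F} := t%:P.
Let u : {poly F} := (Q * w) *: 'X.

Lemma prod_texp n : \prod_(k < n) (q ^+ 2) ^+ k = q ^+ (n * n.-1).
Proof.
elim: n => [|n IH]; first by rewrite big_ord0 expr0.
rewrite big_ord_recr /= IH -exprM -exprD; congr (_ ^+ _); case: n {IH} => //= n; nia.
Qed.

Lemma polyR_first r : (r <= m)%N ->
  \prod_(k < m | (k < r)%N) ((alr r k * t ^+ (m.-1 - k)) *: 'X + (ber r k)%:P) * (q ^+ (r * r.-1))%:P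
  = (Q ^+ r)%:P * \prod_(j < r) (u - T ^+ j).
Proof.
move=> rm.
rewrite (eq_bigl (fun k : 'I_m => true && (k < r)%N)) //.
rewrite -(@big_ord_widen_cond _ 1 *%R r m xpredT (fun k => (alr r k * t ^+ (m.-1 - k)) *: 'X + (ber r k)%:P) rm).
rewrite -prod_texp (rmorph_prod (@polyC F)) -big_split /=.
have -> : (Q ^+ r)%:P = \prod_(k < r) Q%:P by rewrite prodr_const card_ord rmorphXn.
rewrite -big_split /=.
apply: eq_bigr => k _.
have kr : (k < r)%N := ltn_ord k.
rewrite /alr /ber kr.
have e : t ^+ (m.-1 - k) * t ^+ k = Q * Q.
  rewrite -exprD subnK; last by have := ltn_ord k; lia.
  rewrite /t /Q -exprM -exprD; congr (_ ^+ _); lia.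
rewrite /u /T -!mul_polyC -rmorphXn -/t !rmorphM !rmorphN.
have hab : (t ^+ (m.-1 - k))%:P * (t ^+ k)%:P = Q%:P * Q%:P :> {poly F} by rewrite -!rmorphM e.
move: hab; set a := (t ^+ (m.-1 - k))%:P; set b := (t ^+ k)%:P => hab.
transitivity (w%:P * 'X * (a * b) - Q%:P * b); first ring.
rewrite hab; ring.
Qed.

Lemma polyR_second r : (r <= m)%N ->
  \prod_(k < m | ~~ (k < r)%N) ((alr r k * t ^+ (m.-1 - k)) *: 'X + (ber r k)%:P)
  = \prod_(j < m - r) (1 - T ^+ j * u).
Proof.
move=> rm.
rewrite (eq_bigl (fun k : 'I_m => true && (r <= k)%N)); last by move=> k /=; rewrite -leqNgt.
rewrite -(big_geq_mkord r m xpredT (fun k => (alr r k * t ^+ (m.-1 - k)) *: 'X + (ber r k)%:P)).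
rewrite big_nat_rev -{1}(add0n r) big_addn -(big_mkord xpredT (fun j => 1 - T ^+ j * u)).
apply: eq_big_nat => j /andP [_ jr].
have e1 : ((r + m - (j + r).+1) < r)%N = false by apply/negbTE; rewrite -leqNgt; lia.
have e2 : (m.-1 - (r + m - (j + r).+1))%N = j by lia.
rewrite /alr /ber e1 e2 /u /T -!mul_polyC -rmorphXn !rmorphM !rmorphN; ring.
Qed.

Lemma polyR_eq r : (r <= m)%N ->
  qbinom q m r *: polyR r =
  gb T m r * (\prod_(j < r) (u - T ^+ j)) * (\prod_(j < m - r) (1 - T ^+ j * u)).
Proof.
move=> rm.
have c0 : (q ^+ (r * r.-1))%:P != 0 :> {poly F} by rewrite polyC_eq0 expf_neq0.
apply: (mulfI c0).
rewrite /polyR (bigID (fun k : 'I_m => (k < r)%N)) /= polyR_second //.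
rewrite -mul_polyC.
set P1 := \prod_(i < m | _) _.
set P2 := \prod_(j < m - r) _.
transitivity ((qbinom q m r)%:P * (P1 * (q ^+ (r * r.-1))%:P) * P2); first ring.
rewrite /P1 polyR_first //.
rewrite /T gb_polyC gb_qbinom //.
have e : Q ^+ r = q ^+ (r * r.-1) * q ^+ (r * (m - r)).
  rewrite /Q -exprM -exprD; congr (_ ^+ _); clear -rm; case: r rm => [|r] rm; [by rewrite !muln0 | simpl; nia].
rewrite e !rmorphM; ring.
Qed.

Lemma poly_sum_zero : \sum_(r < m.+1) qbinom q m r *: polyR r = 0.
Proof.
rewrite (eq_bigr (fun r : 'I_m.+1 => gb T m r * (\prod_(j < r) (u - T ^+ j)) * (\prod_(j < m - r) (1 - T ^+ j * u)))); last first.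
  by move=> r _; apply: polyR_eq; rewrite -ltnS.
rewrite -(big_mkord xpredT (fun r => gb T m r * (\prod_(j < r) (u - T ^+ j)) * (\prod_(j < m - r) (1 - T ^+ j * u)))).
rewrite vandermonde -(prednK hm) big_ord_recl expr0 subrr mul0r //.
Qed.
End PolyId.

Lemma qint_neq0 (F : fieldType) (q : F) : q != 0 ->
  (forall n, (0 < n)%N -> q ^+ n != 1) -> forall k, qint q k.+1 != 0.
Proof.
move=> hq0 hqn k.
have num : forall n, (0 < n)%N -> q ^+ n - q^-1 ^+ n != 0.
  move=> n hn; apply/eqP => h.
  have : q ^+ (n + n) = 1.
    rewrite exprD; move/eqP: h; rewrite subr_eq0 => /eqP h'.
    by rewrite {1}h' -exprMn mulVf // expr1n.
  by apply/eqP; apply: hqn; rewrite addn_gt0 hn.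
rewrite /qint mulf_neq0 ?invr_neq0 ?num //.
by have := num 1%N isT; rewrite !expr1.
Qed.

Lemma ratfun_facts m :
  [/\ varq m != 0, (2%:R : RatFun m) != 0 & forall n, (0 < n)%N -> varq m ^+ n != 1].
Proof.
pose v := fun _ : 'I_m.+2 => (2%:R : rat).
split.
- rewrite /varq tofrac_eq0; apply/eqP => h; have := congr1 (meval v) h.
  by rewrite mevalXU meval0 => /eqP; rewrite Num.Theory.pnatr_eq0.
- have -> : (2%:R : RatFun m) = tofrac (2%:R : {mpoly rat[m.+2]}) by rewrite rmorph_nat.
  rewrite tofrac_eq0; apply/eqP => h; have := congr1 (meval v) h.
  by rewrite rmorph_nat meval0 => /eqP; rewrite Num.Theory.pnatr_eq0.
- move=> n hn; rewrite /varq -tofracXn -tofrac1 tofrac_eq; apply/eqP => h.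
  have := congr1 (meval v) h; rewrite rmorphXn /= mevalXU meval1 /v -natrX => /eqP.
  rewrite Num.Theory.pnatr_eq1 => /eqP h2.
  by have := ltn_expl n (isT : (1 < 2)%N); rewrite h2; lia.
Qed.

Lemma Lam_lin (F : fieldType) (t : F) m (z : 'I_m -> F) (I : finType) (c : I -> F) (p : I -> {poly F}) :
  \sum_(i : I) c i * Lam t z (p i) = Lam t z (\sum_(i : I) c i *: p i).
Proof.
rewrite /Lam; under [RHS]eq_bigr do rewrite coef_sum mulr_suml.
rewrite [RHS]exchange_big /=; apply: eq_bigr => i _; rewrite mulr_sumr.
by apply: eq_bigr => j _; rewrite coefZ mulrA.
Qed.

Theorem mainTheorem8 (m : nat) (hm : (1 <= m)%N) :
  let q := varq m in
  let w := varw m in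
  let z := @varz m in
  \sum_(s : 'S_m) \sum_(r < m.+1)
     qbinom q m r
     * (\prod_(k < m | (k < r)%N) (w - q ^+ m.-1 * z (s k)))
     * (\prod_(k < m | (r <= k)%N) (z (s k) - q ^+ m.-1 * w))
     * (\prod_(i < m) \prod_(j < m | (i < j)%N)
          ((z (s i) - q ^+ 2 * z (s j)) / (z (s i) - z (s j))))
  = 0.
Proof.
move=> q w z.
have [hq0 h2 hqn] := ratfun_facts m.
have hqi : forall k, qint q k.+1 != 0 := qint_neq0 hq0 hqn.
have t0 : q ^+ 2 != 0 := expf_neq0 _ hq0.
rewrite exchange_big /=.
transitivity (\sum_(r < m.+1) qbinom q m r *
   L (q ^+ 2) z (fun y => \prod_(k < m) (alr q w m r k + ber q m r k * y k))).
  apply: eq_bigr => r _; rewrite /L mulr_sumr; apply: eq_bigr => s _.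
  have hP : \prod_(k < m | (k < r)%N) (w - q ^+ m.-1 * z (s k)) *
            \prod_(k < m | (r <= k)%N) (z (s k) - q ^+ m.-1 * w) =
            \prod_(k < m) (alr q w m r k + ber q m r k * z (s k)).
    rewrite [RHS](bigID (fun k : 'I_m => (k < r)%N)) /=; congr (_ * _).
      by apply: eq_bigr => k kr; rewrite /alr /ber kr; ring.
    apply: eq_big => k; first by rewrite leqNgt.
    by rewrite leqNgt => /negbTE kr; rewrite /alr /ber kr; ring.
  set qb := qbinom q m r.
  rewrite -hP.
  set P1 := \prod_(k < m | (k < r)%N) _.
  set P2 := \prod_(k < m | (r <= k)%N) _.
  by rewrite !mulrA.
under eq_bigr do rewrite L_letters //.
by rewrite Lam_lin poly_sum_zero // /Lam big1 // => j _; rewrite coef0 mul0r.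
Qed.
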